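(* Let $X_1,X_2$ be infinite dimensional Hilbert spaces, $D_1\in\mathcal{B}(X_1)$, $D_2\in\mathcal{B}(X_2)$. Then for every $C\in\mathcal{B}(X_2,X_1)$, writing $M_C=\begin{bmatrix}D_1&C\\0&D_2\end{bmatrix}\in\mathcal{B}(X_1\oplus X_2)$, $$\sigma(D_1)\cup\sigma(D_2)=\sigma(M_C)\cup\big\{\lambda\in\mathbb{C}:\ 0<\beta(D_1-\lambda)\le\alpha(D_2-\lambda)\ \text{or}\ 0<\alpha(D_2-\lambda)\le\beta(D_1-\lambda)\big\}.$$ In particular, if the set $\{\lambda:\ 0<\beta(D_1-\lambda)\le\alpha(D_2-\lambda)$ or $0<\alpha(D_2-\lambda)\le\beta(D_1-\lambda)\}$ is empty, then $\sigma(D_1)\cup\sigma(D_2)=\sigma(M_C)$ for every $C$.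
   Context: For a bounded operator $T$, $\alpha(T)=\dim\mathcal{N}(T)$, $\beta(T)=\operatorname{codim}\mathcal{R}(T)$, values in $\{0,1,\dots\}\cup\{\infty\}$ (comparisons in this extended set). $\sigma(T)$ is the set of $\lambda\in\mathbb{C}$ such that $\lambda-T$ is not invertible. *)

(* Defs.v *)
From HB Require Import structures.
From mathcomp Require Import all_boot all_order all_algebra.
From mathcomp Require Import complex.
From mathcomp Require Import boolp classical_sets reals.
Set Implicit Arguments. Unset Strict Implicit. Unset Printing Implicit Defensive.
Import Order.TTheory GRing.Theory Num.Theory.
Local Open Scope ring_scope.
Local Open Scope classical_set_scope.

Section Hilbert.
Variable R : realType.
Local Notation C := R[i].

Definition inner_product (V : lmodType C) (ip : V -> V -> C) : Prop :=
  [/\ (forall (a : C) (x y z : V), ip (a *: x + y) z = a * ip x z + ip y z),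
      (forall x y : V, ip y x = (ip x y)^*),
      (forall x : V, 0 <= ip x x) &
      (forall x : V, ip x x = 0 -> x = 0)].

Definition hnorm (V : lmodType C) (ip : V -> V -> C) (x : V) : R :=
  Num.sqrt (complex.Re (ip x x)).

Definition hcauchy (V : lmodType C) (ip : V -> V -> C) (u : nat -> V) : Prop :=
  forall e : R, 0 < e -> exists N : nat, forall m n : nat,
    (N <= m)%N -> (N <= n)%N -> hnorm ip (u m - u n) < e.

Definition hconverges (V : lmodType C) (ip : V -> V -> C) (u : nat -> V) (l : V) : Prop :=
  forall e : R, 0 < e -> exists N : nat, forall n : nat,
    (N <= n)%N -> hnorm ip (u n - l) < e.

Definition hilbert_space (V : lmodType C) (ip : V -> V -> C) : Prop :=
  inner_product ip /\
  (forall u : nat -> V, hcauchy ip u -> exists l : V, hconverges ip u l).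

Definition finite_dimensional (V : lmodType C) : Prop :=
  exists (n : nat) (v : 'I_n -> V),
    forall x : V, exists c : 'I_n -> C, x = \sum_(i < n) c i *: v i.

Definition infinite_dimensional (V : lmodType C) : Prop := ~ finite_dimensional V.

Definition is_linear (V W : lmodType C) (T : V -> W) : Prop :=
  forall (a : C) (x y : V), T (a *: x + y) = a *: T x + T y.

Definition bounded_op (V W : lmodType C) (ipV : V -> V -> C) (ipW : W -> W -> C)
  (T : V -> W) : Prop :=
  is_linear T /\ exists M : R, forall x : V, hnorm ipW (T x) <= M * hnorm ipV x.

Definition invertible_op (V : lmodType C) (ip : V -> V -> C) (T : V -> V) : Prop :=
  exists S : V -> V, [/\ bounded_op ip ip S, cancel T S & cancel S T].

Definition spectrum (V : lmodType C) (ip : V -> V -> C) (T : V -> V) : set C :=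
  [set l | ~ invertible_op ip (fun x => l *: x - T x)].

Definition op_shift (V : lmodType C) (T : V -> V) (l : C) : V -> V :=
  fun x => T x - l *: x.

(* ---------- extended naturals {0,1,...} U {oo} : None = oo ---------- *)

Definition ele (a b : option nat) : bool :=
  match a, b with
  | _, None => true
  | None, Some _ => false
  | Some m, Some n => (m <= n)%N
  end.

Definition epos (a : option nat) : bool := a != Some 0%N.

Lemma ex_asbool (P : nat -> Prop) : (exists n, P n) -> exists n, `[< P n >].
Proof. by case=> n Pn; exists n; apply/asboolP. Qed.

Definition mincount (P : nat -> Prop) : option nat :=
  match pselect (exists n, P n) with
  | left h => Some (ex_minn (ex_asbool h))
  | right _ => None
  end.

(* alpha(T) = dim N(T): least number of vectors spanning the kernel *)
Definition alpha (V W : lmodType C) (T : V -> W) : option nat :=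
  mincount (fun n => exists v : 'I_n -> V, forall x : V,
    T x = 0 <-> exists c : 'I_n -> C, x = \sum_(i < n) c i *: v i).

(* beta(T) = codim R(T): least number of vectors whose span together with R(T) is W *)
Definition beta (V W : lmodType C) (T : V -> W) : option nat :=
  mincount (fun n => exists v : 'I_n -> W, forall y : W,
    exists (x : V) (c : 'I_n -> C), y = T x + \sum_(i < n) c i *: v i).

Definition sum_ip (X1 X2 : lmodType C) (ip1 : X1 -> X1 -> C) (ip2 : X2 -> X2 -> C)
  (p q : (X1 * X2)%type) : C := ip1 p.1 q.1 + ip2 p.2 q.2.

Definition upper_tri (X1 X2 : lmodType C) (D1 : X1 -> X1) (Cop : X2 -> X1)
  (D2 : X2 -> X2) (p : (X1 * X2)%type) : (X1 * X2)%type :=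
  (D1 p.1 + Cop p.2, D2 p.2).

Definition defect_set (X1 X2 : lmodType C) (D1 : X1 -> X1) (D2 : X2 -> X2) : set C :=
  [set l | (epos (beta (op_shift D1 l)) && ele (beta (op_shift D1 l)) (alpha (op_shift D2 l)))
        \/ (epos (alpha (op_shift D2 l)) && ele (alpha (op_shift D2 l)) (beta (op_shift D1 l)))].

End Hilbert.

(* Main.v *)
Require Import Defs.
From HB Require Import structures.
From mathcomp Require Import all_boot all_order all_algebra.
From mathcomp Require Import complex.
From mathcomp Require Import boolp classical_sets reals.
From mathcomp Require Import ring lra.
Import Order.TTheory GRing.Theory Num.Theory.
Local Open Scope ring_scope.
Local Open Scope classical_set_scope.
Set Implicit Arguments. Unset Strict Implicit. Unset Printing Implicit Defensive.

Section Aux.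
Variable R : realType.
Local Notation C := R[i].

Section Lin.
Variables V W : lmodType C.
Variable T : V -> W.
Hypothesis HT : is_linear T.

Lemma linD x y : T (x + y) = T x + T y.
Proof. by have := HT 1 x y; rewrite !scale1r. Qed.
Lemma lin0 : T 0 = 0.
Proof. by apply/(addrI (T 0)); rewrite -linD !addr0. Qed.
Lemma linZ a x : T (a *: x) = a *: T x.
Proof. by have := HT a x 0; rewrite !addr0 lin0 addr0. Qed.
Lemma linN x : T (- x) = - T x.
Proof. by rewrite -scaleN1r linZ scaleN1r. Qed.
Lemma linB x y : T (x - y) = T x - T y.
Proof. by rewrite linD linN. Qed.
Lemma linS n (c : 'I_n -> C) (v : 'I_n -> V) :
  T (\sum_(i < n) c i *: v i) = \sum_(i < n) c i *: T (v i).
Proof.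
rewrite (big_morph T linD lin0); apply: eq_bigr => i _; exact: linZ.
Qed.
End Lin.

Definition Bs (V : lmodType C) (D : V -> V) (l : C) (x : V) := l *: x - D x.
Arguments Bs : simpl never.

Lemma shift_lin (V : lmodType C) (D : V -> V) (l : C) :
  is_linear D -> is_linear (Bs D l).
Proof.
move=> HD a x y; rewrite /Bs HD scalerDr scalerA mulrC -scalerA scalerBr.
by rewrite opprD addrACA.
Qed.

Lemma opshift_lin (V : lmodType C) (D : V -> V) (l : C) :
  is_linear D -> is_linear (op_shift D l).
Proof.
move=> HD a x y; rewrite /op_shift HD scalerDr scalerA mulrC -scalerA scalerBr.
by rewrite opprD addrACA.
Qed.

Lemma opshiftE (V : lmodType C) (D : V -> V) (l : C) x :
  op_shift D l x = - Bs D l x.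
Proof. by rewrite /op_shift /Bs opprB. Qed.

Definition nn (V : lmodType C) (ip : V -> V -> C) (x : V) : R := complex.Re (ip x x).

Lemma ReD (x y : C) : complex.Re (x + y) = complex.Re x + complex.Re y.
Proof. by case: x; case: y. Qed.
Lemma ReN (x : C) : complex.Re (- x) = - complex.Re x.
Proof. by case: x. Qed.

Section IP.
Variable V : lmodType C.
Variable ip : V -> V -> C.
Hypothesis Hip : inner_product ip.

Lemma ipD1 x y z : ip (x + y) z = ip x z + ip y z.
Proof. by case: Hip => H _ _ _; have := H 1 x y z; rewrite scale1r mul1r. Qed.
Lemma ip01 z : ip 0 z = 0.
Proof. by apply/(addrI (ip 0 z)); rewrite -ipD1 !addr0. Qed.
Lemma ipN1 x z : ip (- x) z = - ip x z.
Proof.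
case: Hip => H _ _ _.
by have := H (-1) x 0 z; rewrite scaleN1r !addr0 ip01 addr0 mulN1r.
Qed.
Lemma ipD2 x y z : ip x (y + z) = ip x y + ip x z.
Proof.
case: Hip => _ Hs _ _.
by rewrite Hs ipD1 rmorphD (Hs y x) (Hs z x).
Qed.
Lemma ipN2 x z : ip x (- z) = - ip x z.
Proof.
case: Hip => _ Hs _ _.
by rewrite Hs ipN1 rmorphN (Hs z x).
Qed.

Lemma nn_ge0 x : 0 <= nn ip x.
Proof. by case: Hip => _ _ H _; move: (H x); rewrite lecE => /andP[]. Qed.

Lemma nn0 : nn ip 0 = 0.
Proof. by rewrite /nn ip01. Qed.

Lemma nn_par a b : nn ip (a + b) <= 2 * nn ip a + 2 * nn ip b.
Proof.
have E : nn ip (a + b) + nn ip (a - b) = 2 * nn ip a + 2 * nn ip b.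
  rewrite /nn -ReD !ipD1 !ipD2 !ipN1 !ipN2 opprK.
  have -> : ip a a + ip a b + (ip b a + ip b b) + (ip a a - ip a b + (- ip b a + ip b b))
     = (ip a a + ip b b) *+ 2 by rewrite mulr2n; ring.
  rewrite -mulr_natr ReD.
  rewrite ReD; ring.
have := nn_ge0 (a - b); rewrite -E; lra.
Qed.
End IP.

Lemma bounded_nn (V W : lmodType C) (ipV : V -> V -> C) (ipW : W -> W -> C) T :
  (forall x, 0 <= nn ipV x) -> (forall y, 0 <= nn ipW y) ->
  bounded_op ipV ipW T -> exists K, 0 <= K /\ forall x, nn ipW (T x) <= K * nn ipV x.
Proof.
move=> HV HW [_ [M HM]]; exists (Num.max M 0 ^+ 2); split; first exact: sqr_ge0.
move=> x; have := HM x; rewrite /hnorm -/(nn ipW (T x)) -/(nn ipV x) => h.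
have h0 := HW (T x); have h1 := HV x.
have s0 := sqrtr_ge0 (nn ipW (T x)); have s1 := sqrtr_ge0 (nn ipV x).
have hM : Num.sqrt (nn ipW (T x)) <= Num.max M 0 * Num.sqrt (nn ipV x).
  apply: (le_trans h); apply: ler_wpM2r => //; by rewrite le_max lexx.
have m0 : 0 <= Num.max M 0 by by rewrite le_max lexx orbT.
rewrite -(sqr_sqrtr h0) -(sqr_sqrtr h1) -exprMn.
by rewrite lerXn2r // ?nnegrE // mulr_ge0.
Qed.

Lemma nn_bounded (V W : lmodType C) (ipV : V -> V -> C) (ipW : W -> W -> C) T :
  is_linear T ->
  (exists K, 0 <= K /\ forall x, nn ipW (T x) <= K * nn ipV x) -> bounded_op ipV ipW T.
Proof.
move=> HT [K [K0 HK]]; split => //; exists (Num.sqrt K) => x.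
rewrite /hnorm -/(nn ipW (T x)) -/(nn ipV x) -sqrtrM //.
exact: ler_wsqrtr.
Qed.

Lemma nn_sum (X1 X2 : lmodType C) (ip1 : X1 -> X1 -> C) (ip2 : X2 -> X2 -> C) p :
  nn (sum_ip ip1 ip2) p = nn ip1 p.1 + nn ip2 p.2.
Proof. by rewrite /nn /sum_ip ReD. Qed.


Lemma mincount_eq (P Q : nat -> Prop) : (forall n, P n <-> Q n) -> mincount P = mincount Q.
Proof. by move=> h; have -> : P = Q by apply/funext => n; apply/propext. Qed.

Lemma mincount0 (P : nat -> Prop) : P 0%N -> mincount P = Some 0%N.
Proof.
move=> P0; rewrite /mincount; case: pselect => [h|h]; last by exfalso; apply: h; exists 0%N.
case: ex_minnP => m _ /(_ 0%N); rewrite leqn0 => H.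
by rewrite (eqP (H _)) //; apply/asboolP.
Qed.

Lemma mincount_some0 (P : nat -> Prop) : mincount P = Some 0%N -> P 0%N.
Proof.
rewrite /mincount; case: pselect => // h; case: ex_minnP => m Pm _ [Hm].
by move: Pm; rewrite Hm => /asboolP.
Qed.

Section Main.
Variables X1 X2 : lmodType C.
Variables (ip1 : X1 -> X1 -> C) (ip2 : X2 -> X2 -> C).
Hypotheses (HI1 : inner_product ip1) (HI2 : inner_product ip2).
Variables (D1 : X1 -> X1) (D2 : X2 -> X2) (Cop : X2 -> X1).
Hypotheses (BD1 : bounded_op ip1 ip1 D1) (BD2 : bounded_op ip2 ip2 D2)
  (BC : bounded_op ip2 ip1 Cop).
Variable l : C.

Lemma pairE (p q : (X1 * X2)%type) : p.1 = q.1 -> p.2 = q.2 -> p = q.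
Proof. by case: p q => ? ? [? ?] /= -> ->. Qed.

Lemma fstD (p q : (X1 * X2)%type) : (p + q).1 = p.1 + q.1. Proof. by []. Qed.
Lemma sndD (p q : (X1 * X2)%type) : (p + q).2 = p.2 + q.2. Proof. by []. Qed.
Lemma fstZ a (p : (X1 * X2)%type) : (a *: p).1 = a *: p.1. Proof. by []. Qed.
Lemma sndZ a (p : (X1 * X2)%type) : (a *: p).2 = a *: p.2. Proof. by []. Qed.
Lemma fstB (p q : (X1 * X2)%type) : (p - q).1 = p.1 - q.1. Proof. by []. Qed.
Lemma sndB (p q : (X1 * X2)%type) : (p - q).2 = p.2 - q.2. Proof. by []. Qed.
Lemma fst0 : (0 : (X1 * X2)%type).1 = 0. Proof. by []. Qed.
Lemma snd0 : (0 : (X1 * X2)%type).2 = 0. Proof. by []. Qed.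
Lemma sndS n (F : 'I_n -> (X1 * X2)%type) : (\sum_(i < n) F i).2 = \sum_(i < n) (F i).2.
Proof. exact: (big_morph snd sndD snd0). Qed.
Lemma fstS n (F : 'I_n -> (X1 * X2)%type) : (\sum_(i < n) F i).1 = \sum_(i < n) (F i).1.
Proof. exact: (big_morph fst fstD fst0). Qed.

Definition TT := fun p : (X1 * X2)%type => l *: p - upper_tri D1 Cop D2 p.
Lemma TT1 p : (TT p).1 = Bs D1 l p.1 - Cop p.2.
Proof. by rewrite /TT fstB fstZ /upper_tri /= opprD addrA. Qed.
Lemma TT2 p : (TT p).2 = Bs D2 l p.2.
Proof. by []. Qed.

Lemma invB :
  invertible_op ip1 (fun x => l *: x - D1 x) -> invertible_op ip2 (fun x => l *: x - D2 x) ->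
  invertible_op (sum_ip ip1 ip2) TT.
Proof.
move=> [S1 [BS1 c1 c1']] [S2 [BS2 c2 c2']].
change (cancel (Bs D1 l) S1) in c1; change (cancel S1 (Bs D1 l)) in c1'.
change (cancel (Bs D2 l) S2) in c2; change (cancel S2 (Bs D2 l)) in c2'.
have LS1 := BS1.1; have LS2 := BS2.1; have LC := BC.1.
exists (fun p => (S1 (p.1 + Cop (S2 p.2)), S2 p.2)); split.
- apply: nn_bounded.
  + move=> a p q; apply: pairE; rewrite /= ?fstD ?sndD ?fstZ ?sndZ.
    * rewrite LS2 LC -LS1; congr S1; rewrite scalerDr; exact: addrACA.
    * exact: LS2.
  + have [K1 [K10 HK1]] := bounded_nn (nn_ge0 HI1) (nn_ge0 HI1) BS1.
    have [K2 [K20 HK2]] := bounded_nn (nn_ge0 HI2) (nn_ge0 HI2) BS2.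
    have [KC [KC0 HKC]] := bounded_nn (nn_ge0 HI2) (nn_ge0 HI1) BC.
    exists (2 * K1 + 2 * K1 * KC * K2 + K2); split.
      by rewrite !addr_ge0 // !mulr_ge0.
    move=> x; rewrite !nn_sum /=.
    have h2 := HK2 x.2.
    have n1 := nn_ge0 HI1 x.1; have n2 := nn_ge0 HI2 x.2.
    have e1 : nn ip1 (S1 (x.1 + Cop (S2 x.2))) <=
        K1 * (2 * nn ip1 x.1 + 2 * (KC * (K2 * nn ip2 x.2))).
      apply: (le_trans (HK1 _)); apply: ler_wpM2l => //.
      apply: (le_trans (nn_par HI1 _ _)); rewrite lerD2l; apply: ler_wpM2l => //.
      apply: (le_trans (HKC _)); exact: ler_wpM2l.
    set m1 := nn ip1 x.1 in n1 e1 *; set m2 := nn ip2 x.2 in n2 h2 e1 *.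
    have E : K1 * (2 * m1 + 2 * (KC * (K2 * m2))) = 2 * K1 * m1 + 2 * K1 * KC * K2 * m2 by ring.
    rewrite E in e1.
    have p1 : 0 <= (2 * K1 * KC * K2 + K2) * m1 by rewrite mulr_ge0 // addr_ge0 // !mulr_ge0.
    have p2 : 0 <= 2 * K1 * m2 by rewrite !mulr_ge0.
    have E2 : (2 * K1 + 2 * K1 * KC * K2 + K2) * (m1 + m2) =
      2 * K1 * m1 + 2 * K1 * KC * K2 * m2 + K2 * m2 + ((2 * K1 * KC * K2 + K2) * m1 + 2 * K1 * m2) by ring.
    rewrite E2; lra.
- move=> p; apply: pairE; rewrite ?TT1 ?TT2 /= c2 ?subrK ?c1 //.
- move=> p; apply: pairE; rewrite ?TT1 ?TT2 /= ?c1' ?c2' ?addrK //.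
Qed.


Lemma nnS_ge0 p : 0 <= nn (sum_ip ip1 ip2) p.
Proof. by rewrite nn_sum addr_ge0 // nn_ge0. Qed.

Lemma invA : invertible_op (sum_ip ip1 ip2) TT ->
  (spectrum ip1 D1 l \/ spectrum ip2 D2 l) -> defect_set D1 D2 l.
Proof.
move=> [S [BS cTS cST]] Hsp.
have LS := BS.1; have LD1 := BD1.1; have LD2 := BD2.1; have LC := BC.1.
have LB1 := shift_lin l LD1; have LB2 := shift_lin l LD2.
change (~ invertible_op ip1 (Bs D1 l) \/ ~ invertible_op ip2 (Bs D2 l)) in Hsp.
have T0 : forall x z, TT (x, z) = (Bs D1 l x - Cop z, Bs D2 l z).
  by move=> x z; apply: pairE; rewrite ?TT1 ?TT2.
have [K [K0 HK]] := bounded_nn nnS_ge0 nnS_ge0 BS.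
have EQ : alpha (op_shift D2 l) = beta (op_shift D1 l).
  rewrite /alpha /beta; apply: mincount_eq => n; split.
  - case=> v Hv; exists (fun i => Cop (v i)) => y.
    have Tp := cST (- y, 0).
    have h1 : Bs D1 l (S (-y, 0)).1 - Cop (S (-y, 0)).2 = - y by rewrite -TT1 Tp.
    have h2 : Bs D2 l (S (-y, 0)).2 = 0 by rewrite -TT2 Tp.
    have [c Hc] := (Hv (S (-y, 0)).2).1 ltac:(by rewrite opshiftE h2 oppr0).
    exists (S (-y, 0)).1, c; rewrite -(linS LC) -Hc opshiftE.
    have -> : forall a b : X1, - a + b = - (a - b) by move=> a b; rewrite opprB addrC.
    by rewrite h1 opprK.
  - case=> w Hw; exists (fun i => (S (w i, 0)).2) => z; split.
    + move=> Hz; have Bz : Bs D2 l z = 0 by apply/eqP; rewrite -oppr_eq0 -opshiftE Hz.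
      have [x [c Hc]] := Hw (Cop z).
      have E : TT (x, - z) = \sum_(i < n) c i *: (w i, 0).
        apply: pairE; rewrite ?TT1 ?TT2 ?fstS ?sndS /=.
        * by rewrite (linN LC) opprK Hc opshiftE addNKr.
        * by rewrite (linN LB2) Bz oppr0 big1 // => i _; rewrite scaler0.
      have : (x, - z) = \sum_(i < n) c i *: S (w i, 0) by rewrite -(linS LS) -E cTS.
      move/(congr1 snd); rewrite sndS /= => Hz'.
      exists (fun i => - c i); rewrite -[z]opprK Hz' -sumrN; apply: eq_bigr => i _.
      by rewrite scaleNr.
    + case=> c ->; rewrite (linS (opshift_lin l LD2)) big1 // => i _.
      by rewrite opshiftE -TT2 cST /= oppr0 scaler0.
left; rewrite -EQ; apply/andP; split; last by case: (alpha _) => //= m.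
apply/negP => /eqP /mincount_some0 [v Hv].
have Binj2 : forall x, Bs D2 l x = 0 -> x = 0.
  move=> x Bx; have [c ->] := (Hv x).1 ltac:(by rewrite opshiftE Bx oppr0).
  by rewrite big_ord0.
case: Hsp; apply.
- exists (fun y => (S (y, 0)).1); split.
  + apply: nn_bounded.
    * move=> a x y; have -> : (a *: x + y, 0) = a *: (x, 0) + (y, 0) :> (X1 * X2)%type.
        by apply: pairE => //=; rewrite scaler0 addr0.
      by rewrite LS.
    * exists K; split => // y; apply: (le_trans _ (le_trans (HK (y, 0)) _)).
      - by rewrite nn_sum lerDl nn_ge0.
      - by rewrite nn_sum /= nn0 // addr0.
  + by move=> x /=; have := cTS (x, 0); rewrite T0 (lin0 LC) (lin0 LB2) subr0 => ->.
  + move=> y /=; have Tp := cST (y, 0).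
    have h2 : Bs D2 l (S (y, 0)).2 = 0 by rewrite -TT2 Tp.
    have h1 := TT1 (S (y, 0)); rewrite Tp /= (Binj2 _ h2) (lin0 LC) subr0 in h1.
    by rewrite -h1.
- exists (fun y => (S (0, y)).2); split.
  + apply: nn_bounded.
    * move=> a x y; have -> : (0, a *: x + y) = a *: (0, x) + (0, y) :> (X1 * X2)%type.
        by apply: pairE => //=; rewrite scaler0 addr0.
      by rewrite LS.
    * exists K; split => // y; apply: (le_trans _ (le_trans (HK (0, y)) _)).
      - by rewrite nn_sum lerDr nn_ge0.
      - by rewrite nn_sum /= nn0 // add0r.
  + move=> x /=; apply/eqP; rewrite -subr_eq0; apply/eqP/Binj2.
    by rewrite (linB LB2) -TT2 cST /= subrr.
  + by move=> y /=; rewrite -TT2 cST.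
Qed.

Lemma invC : defect_set D1 D2 l -> spectrum ip1 D1 l.
Proof.
move=> Hd [S1 [_ c1 c1']].
change (cancel S1 (Bs D1 l)) in c1'.
have hb : beta (op_shift D1 l) = Some 0%N.
  apply: mincount0; exists (fun _ => 0) => y; exists (S1 (- y)), (fun _ => 0).
  by rewrite big_ord0 addr0 opshiftE c1' opprK.
move: Hd; rewrite /defect_set /= hb; case=> //.
by case: (alpha _) => [[|m]|].
Qed.

End Main.
End Aux.

Theorem mainTheorem16 (R : realType) (X1 X2 : lmodType R[i])
  (ip1 : X1 -> X1 -> R[i]) (ip2 : X2 -> X2 -> R[i])
  (H1 : hilbert_space ip1) (H2 : hilbert_space ip2)
  (Inf1 : infinite_dimensional X1) (Inf2 : infinite_dimensional X2)
  (D1 : X1 -> X1) (D2 : X2 -> X2)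
  (BD1 : bounded_op ip1 ip1 D1) (BD2 : bounded_op ip2 ip2 D2) :
  (forall Cop : X2 -> X1, bounded_op ip2 ip1 Cop ->
     spectrum ip1 D1 `|` spectrum ip2 D2 =
     spectrum (sum_ip ip1 ip2) (upper_tri D1 Cop D2) `|` defect_set D1 D2)
  /\
  (defect_set D1 D2 = set0 ->
     forall Cop : X2 -> X1, bounded_op ip2 ip1 Cop ->
     spectrum ip1 D1 `|` spectrum ip2 D2 =
     spectrum (sum_ip ip1 ip2) (upper_tri D1 Cop D2)).
Proof.
have HI1 := H1.1; have HI2 := H2.1.
have P1 : forall Cop : X2 -> X1, bounded_op ip2 ip1 Cop ->
     spectrum ip1 D1 `|` spectrum ip2 D2 =
     spectrum (sum_ip ip1 ip2) (upper_tri D1 Cop D2) `|` defect_set D1 D2.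
  move=> Cop BC; apply/seteqP; split => l.
  - move=> H; case: (pselect (spectrum (sum_ip ip1 ip2) (upper_tri D1 Cop D2) l)) => h.
      by left.
    right; apply: (invA HI1 HI2 BD1 BD2 BC) => //; exact: contrapT h.
  - case=> [h|h]; last by left; exact: (invC h).
    apply: contrapT => /not_orP [n1 n2]; apply: h.
    apply: (invB HI1 HI2 BC); exact: contrapT.
split => //; move=> H0 Cop BC; by rewrite (P1 Cop BC) H0 setU0.
Qed.
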